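(* Let $K\ge 1$ and let $f\colon\mathbb{B}^2\to\mathbb{B}^2$ be a non-constant $K$-quasiregular mapping of the unit disk $\mathbb{B}^2=\{x\in\mathbb{R}^2:|x|<1\}$. Let $\rho=\rho_{\mathbb{B}^2}$ be the hyperbolic metric of $\mathbb{B}^2$, let $\lambda\ge 1$, and put $$W_\lambda(x,y)=\log\Big(1+2\lambda\sinh\frac{\rho(x,y)}{2}\Big),\qquad x,y\in\mathbb{B}^2.$$ Let $c(K)$ be the constant described in the context. Then for all $x,y\in\mathbb{B}^2$, $$W_\lambda(f(x),f(y))\le 2\lambda c(K)\max\big\{W_\lambda(x,y)^{1/K},\,W_\lambda(x,y)\big\}.$$
   Context: The hyperbolic metric of the unit disk is given by $\tanh\frac{\rho_{\mathbb{B}^2}(x,y)}{2}=\frac{|x-y|}{\sqrt{|x-y|^2+(1-|x|^2)(1-|y|^2)}}$; for a simply connected proper plane domain $G$ the hyperbolic metric $\rho_G$ is defined by transporting $\rho_{\mathbb{B}^2}$ via a Riemann map. The constant $c(K)$ (depending only on $K$) is the constant of the Schwarz lemma for quasiregular maps (Hariri–Klén–Vuorinen, Thm 16.39; Wang–Vuorinen, Thm 3.6): for all simply connected plane domains $G_1$ and every $K$-quasiregular map $f\colon G_1\to G_2=f(G_1)$ with $G_2$ simply connected, $\rho_{G_2}(f(x),f(y))\le c(K)\max\{\rho_{G_1}(x,y),\rho_{G_1}(x,y)^{1/K}\}$ for all $x,y\in G_1$; it satisfies $K\le c(K)\le \log\big(2(1+\sqrt{1-1/e^2})\big)(K-1)+K$.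 *)

(* Defs.v *)
From mathcomp Require Import all_boot all_order all_algebra.
From mathcomp Require Import all_classical all_reals all_analysis.
Set Implicit Arguments. Unset Strict Implicit. Unset Printing Implicit Defensive.
Import Order.TTheory GRing.Theory Num.Theory.
Import numFieldNormedType.Exports.
Local Open Scope classical_set_scope.
Local Open Scope ring_scope.

Section QRDefs.
Variable R : realType.

Definition sqnorm2 (x : R * R) : R := x.1 ^+ 2 + x.2 ^+ 2.

Definition unit_disk : set (R * R) := [set x | sqnorm2 x < 1].

Definition leb2 := (@lebesgue_measure R \x @lebesgue_measure R)%E.

Definition e1 : R * R := (1, 0).
Definition e2 : R * R := (0, 1).

(* C^infty functions R^2 -> R: phi lies in a family of everywhere
   (Frechet) differentiable functions closed under both partial derivatives. *)
Definition smooth2 (phi : R * R -> R) : Prop :=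
  exists S : set (R * R -> R), S phi /\
    forall psi, S psi ->
      (forall x, differentiable psi x) /\ S ('D_e1 psi) /\ S ('D_e2 psi).

Definition test_fun (G : set (R * R)) (phi : R * R -> R) : Prop :=
  smooth2 phi /\ compact (closure [set x | phi x != 0]) /\
  closure [set x | phi x != 0] `<=` G.

Definition L2loc (G : set (R * R)) (u : R * R -> R) : Prop :=
  measurable_fun G u /\
  forall C : set (R * R), compact C -> C `<=` G ->
    (\int[leb2]_(x in C) ((u x) ^+ 2)%:E < +oo)%E.

Definition weak_partial (G : set (R * R)) (v : R * R) (u g : R * R -> R) : Prop :=
  forall phi, test_fun G phi ->
    (\int[leb2]_(x in G) (u x * 'D_v phi x)%:E
      = - \int[leb2]_(x in G) (g x * phi x)%:E)%E.

Definition W12loc (G : set (R * R)) (u ux uy : R * R -> R) : Prop :=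
  [/\ L2loc G u, L2loc G ux, L2loc G uy,
      weak_partial G e1 u ux & weak_partial G e2 u uy].

(* K-quasiregular maps f : G -> R^2 (G open): f continuous on G,
   f = (u, v) in W^{1,2}_loc(G), and |f'(x)|^2 <= K J_f(x) for a.e. x in G,
   where f'(x) = [[ux uy];[vx vy]], |.| the operator norm, J_f = det f'. *)
Definition quasiregular (K : R) (G : set (R * R)) (f : R * R -> R * R) : Prop :=
  open G /\ {within G, continuous f} /\
  exists ux uy vx vy : R * R -> R,
    [/\ W12loc G (fun x => (f x).1) ux uy,
        W12loc G (fun x => (f x).2) vx vy &
        {ae leb2, forall x, G x ->
           forall h : R * R, sqnorm2 h = 1 ->
             sqnorm2 (ux x * h.1 + uy x * h.2, vx x * h.1 + vy x * h.2)
               <= K * (ux x * vy x - uy x * vx x)}].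

Definition artanh (t : R) : R := (ln ((1 + t) / (1 - t))) / 2.
Definition sinh (t : R) : R := (expR t - expR (- t)) / 2.

(* Hyperbolic metric of the unit disk:
   tanh (rho(x,y)/2) = |x-y| / sqrt(|x-y|^2 + (1-|x|^2)(1-|y|^2)). *)
Definition rhoB (x y : R * R) : R :=
  let d2 := sqnorm2 (x.1 - y.1, x.2 - y.2) in
  2 * artanh (Num.sqrt d2 / Num.sqrt (d2 + (1 - sqnorm2 x) * (1 - sqnorm2 y))).

Definition Wlam (lam : R) (x y : R * R) : R :=
  ln (1 + 2 * lam * sinh (rhoB x y / 2)).

End QRDefs.

(* Main.v *)
Require Import Defs.
From mathcomp Require Import all_boot all_order all_algebra.
From mathcomp Require Import all_classical all_reals all_analysis.
From mathcomp Require Import lra ring.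
Import Order.TTheory GRing.Theory Num.Theory.
Import numFieldNormedType.Exports.
Local Open Scope classical_set_scope.
Local Open Scope ring_scope.

Section H.
Variable R : realType.

Lemma artanh_ge0 (q : R) : 0 <= q -> 0 <= artanh q.
Proof.
move=> q0; rewrite /artanh; apply: divr_ge0 => //.
have [q1|q1] := ltP q 1.
  apply: ln_ge0; rewrite ler_pdivlMr ?subr_gt0 //; lra.
rewrite ln0 //; apply: mulr_ge0_le0; first lra.
by rewrite invr_le0; lra.
Qed.

Lemma rhoB_ge0 (x y : R * R) : 0 <= rhoB x y.
Proof.
rewrite /rhoB /=; apply: mulr_ge0 => //; apply: artanh_ge0.
by apply: divr_ge0; apply: sqrtr_ge0.
Qed.

Lemma sinh_ge0 (u : R) : 0 <= u -> 0 <= sinh u.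
Proof.
move=> u0; rewrite /sinh; apply: divr_ge0 => //.
rewrite subr_ge0 ler_expR; lra.
Qed.

Lemma ln_bern (l z : R) : 1 <= l -> 0 <= z -> ln (1 + l * z) <= l * ln (1 + z).
Proof.
move=> l1 z0.
have l0 : 0 < l by lra.
have il : l^-1 <= 1 by rewrite invf_le1 //; lra.
have il0 : 0 <= l^-1 by rewrite invr_ge0; lra.
have h0 := mulr_ge0 (ltW l0) z0.
have a0 : 0 < 1 + l * z by lra.
have := @concave_ln R (Itv01 (eqbRL (invr_ge0 _) (ltW l0)) il) (1 + l * z) 1 a0 ltr01.
rewrite !convRE /= ln1 mulr0 addr0.
have -> : l^-1 * (1 + l * z) + (1 - l^-1) * 1 = 1 + z.
  rewrite mulrDr mulrA mulVf ?gt_eqF //; ring.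
move=> H; rewrite -(ler_pM2l (x:=l^-1)) ?invr_gt0 // mulrA mulVf ?gt_eqF // mul1r.
exact: H.
Qed.

Lemma ln_sinh_le (u : R) : 0 <= u -> ln (1 + 2 * sinh u) <= 2 * u.
Proof.
move=> u0.
set a := expR u. have a1 : 1 <= a by rewrite /a -expR0 ler_expR.
have hb : expR (- u) = a^-1 by rewrite expRN.
have ab : a * a^-1 = 1 by rewrite mulfV // gt_eqF //; lra.
have b0 : 0 < a^-1 by rewrite invr_gt0; lra.
have b1 : a^-1 <= 1 by rewrite invf_le1 //; lra.
have e : 1 + 2 * sinh u = 1 + a - a^-1.
  rewrite /sinh hb -/a; field; rewrite gt_eqF //; lra.
rewrite e -ler_expR lnK ?posrE; last lra.
have -> : expR (2 * u) = a * a by rewrite -expRD /a; congr expR; ring.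
have h : 0 <= a^-1 * ((a - 1) ^+ 2 * (a + 1)) by apply: mulr_ge0; [lra| apply: mulr_ge0; [apply: sqr_ge0|lra]].
nra.
Qed.

Lemma W_lb (l s : R) : 1 <= l -> 0 <= s -> s / 2 <= ln (1 + 2 * l * sinh (s / 2)).
Proof.
move=> l1 s0.
have u0 : 0 <= s / 2 by lra.
set u := s / 2 in u0 *.
set a := expR u. have a1 : 1 <= a by rewrite /a -expR0 ler_expR.
have hb : expR (- u) = a^-1 by rewrite expRN.
have b0 : 0 < a^-1 by rewrite invr_gt0; lra.
have b1 : a^-1 <= 1 by rewrite invf_le1 //; lra.
have sh := @sinh_ge0 u u0.
have e : sinh u = (a - a^-1) / 2 by rewrite /sinh hb.
have h : a <= 1 + 2 * l * sinh u.
  rewrite e. have : 0 <= (l - 1) * (a - a^-1) by apply: mulr_ge0; lra.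
  nra.
rewrite -[X in X <= _]expRK ler_ln ?posrE ?expR_gt0 //; lra.
Qed.

End H.
Arguments artanh_ge0 {R}. Arguments rhoB_ge0 {R}. Arguments sinh_ge0 {R}. Arguments ln_bern {R}. Arguments ln_sinh_le {R}. Arguments W_lb {R}.

Theorem theorem1p3 (R : realType) (K lam c : R) :
  1 <= K -> 1 <= lam ->
  (* properties of the Schwarz-lemma constant c = c(K) *)
  K <= c ->
  c <= ln (2 * (1 + Num.sqrt (1 - (expR 2)^-1))) * (K - 1) + K ->
  (forall g : R * R -> R * R,
     quasiregular K (@unit_disk R) g ->
     (forall x, @unit_disk R x -> @unit_disk R (g x)) ->
     forall x y, @unit_disk R x -> @unit_disk R y ->
       rhoB (g x) (g y) <= c * Num.max (rhoB x y) (powR (rhoB x y) K^-1)) ->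
  forall f : R * R -> R * R,
    quasiregular K (@unit_disk R) f ->
    (forall x, @unit_disk R x -> @unit_disk R (f x)) ->
    (exists x y, [/\ @unit_disk R x, @unit_disk R y & f x <> f y]) ->
    forall x y, @unit_disk R x -> @unit_disk R y ->
      Wlam lam (f x) (f y)
        <= 2 * lam * c * Num.max (powR (Wlam lam x y) K^-1) (Wlam lam x y).
Proof.
move=> K1 l1 Kc _ Hs f qf fD _ x y xD yD.
have Hf := Hs f qf fD x y xD yD.
have s0 := rhoB_ge0 x y. have t0 := rhoB_ge0 (f x) (f y).
set s := rhoB x y in Hf s0 *. set t := rhoB (f x) (f y) in Hf t0 *.
have Ws : s / 2 <= Wlam lam x y by exact: W_lb.
set W := Wlam lam x y in Ws *.
have W0 : 0 <= W by lra.
have c0 : 0 <= c by lra.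
have step1 : Wlam lam (f x) (f y) <= lam * t.
  rewrite /Wlam -/t.
  have -> : 1 + 2 * lam * sinh (t / 2) = 1 + lam * (2 * sinh (t / 2)) by ring.
  have sh : 0 <= sinh (t / 2) by apply: sinh_ge0; lra.
  have hz : 0 <= 2 * sinh (t / 2) by lra.
  apply: le_trans (ln_bern lam _ l1 hz) _.
  have := @ln_sinh_le R (t / 2) ltac:(lra).
  move=> h; have : 0 <= lam * (t - ln (1 + 2 * sinh (t / 2))) by apply: mulr_ge0; lra.
  nra.
have Ki : K^-1 <= 1 by rewrite invf_le1 //; lra.
have Ki0 : 0 <= K^-1 by rewrite invr_ge0; lra.
have p2 : 2 `^ K^-1 <= 2 :> R by apply: ler1_powR => //; lra.
have pW0 : 0 <= W `^ K^-1 by apply: powR_ge0.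
have ps : s `^ K^-1 <= 2 * W `^ K^-1.
  have hh := @ge0_ler_powR R _ Ki0 s (2 * W).
  have h1 : s `^ K^-1 <= (2 * W) `^ K^-1 by apply: hh; rewrite ?nnegrE; lra.
  apply: le_trans h1 _.
  have h2 : 0 <= 2 :> R by lra.
  rewrite (powRM _ h2 W0).
  by apply: ler_wpM2r.
have step2 : Num.max s (s `^ K^-1) <= 2 * Num.max (W `^ K^-1) W.
  have m1 := le_max W (W `^ K^-1) W. rewrite lexx orbT in m1.
  have m2 := le_max (W `^ K^-1) (W `^ K^-1) W. rewrite lexx in m2.
  rewrite ge_max; apply/andP; split; lra.
apply: le_trans step1 _.
have : lam * t <= lam * (c * Num.max s (s `^ K^-1)) by apply: ler_wpM2l => //; lra.
have : c * Num.max s (s `^ K^-1) <= c * (2 * Num.max (W `^ K^-1) W) by apply: ler_wpM2l.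
have : 0 <= lam by lra.
nra.
Qed.
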